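(* Let $v\ne 7$ with $v\equiv 1\pmod 6$ or $v\equiv 9\pmod{18}$. Then every cyclic $\mathrm{STS}(v)$ admits a zero-sum $3$-flow.
   Context: A Steiner triple system $\mathrm{STS}(v)$ is a pair $(X,\mathcal{B})$ with $|X|=v$ and $\mathcal{B}$ a collection of 3-subsets of $X$ such that every 2-subset lies in exactly one block. It is cyclic if, after relabeling, $X=\mathbb{Z}_v$ and $i\mapsto i+1\pmod v$ maps blocks to blocks. For a design $(X,\mathcal{B})$ and integer $n\ge2$, a zero-sum $n$-flow is a map $f:\mathcal{B}\to\{\pm1,\ldots,\pm(n-1)\}$ such that $\sum_{B\ni x} f(B)=0$ for every point $x$; thus a zero-sum 3-flow takes values in $\{\pm1,\pm2\}$. *)

(* Defs.v *)
From mathcomp Require Import all_boot all_order all_algebra.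
Set Implicit Arguments. Unset Strict Implicit. Unset Printing Implicit Defensive.
Import GRing.Theory Num.Theory.

Definition is_STS (T : finType) (B : {set {set T}}) : Prop :=
  (forall b, b \in B -> #|b| = 3) /\
  (forall x y : T, x != y -> #|[set b in B | (x \in b) && (y \in b)]| = 1).

(* Cyclic: after relabeling the points by Z_v (here 'I_v, v = #|T|) via a
   bijection g with inverse h, the map i |-> i+1 (mod v) maps blocks to blocks. *)
Definition is_cyclic_design (T : finType) (v : nat) (B : {set {set T}}) : Prop :=
  exists (g : T -> 'I_v) (h : 'I_v -> T),
    cancel g h /\ cancel h g /\
    (forall b, b \in B -> [set h (ordS (g x)) | x in b] \in B).

Definition zero_sum_flow (T : finType) (B : {set {set T}}) (n : nat)
    (f : {set T} -> int) : Prop :=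
  (forall b, b \in B -> f b != 0 /\ (`|f b| < n%:Z)%R) /\
  (forall x : T, (\sum_(b in B | x \in b) f b)%R = 0%R).

(* Main.v *)
Require Import Defs.
From mathcomp Require Import all_boot all_order all_algebra.
From mathcomp Require Import ring zify.
From Stdlib Require Import Classical.
Set Implicit Arguments. Unset Strict Implicit. Unset Printing Implicit Defensive.
Import GRing.Theory Num.Theory.
Local Open Scope ring_scope.
Lemma zero_sum_choice (A : finType) (K : {set A}) : #|K| != 1%N ->
  exists F : A -> int, (forall a, F a != 0 /\ `|F a| < 3) /\ \sum_(a in K) F a = 0.
Proof.
have [m] := ubnP #|K|; elim: m K => // m IH K; rewrite ltnS => HK H1.
case: (posnP #|K|) => [/eqP|] K0.
  exists (fun _ => 1); split => //; rewrite cards_eq0 in K0.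
  by rewrite (eqP K0) big_set0.
have [a Ha] : exists a, a \in K by apply/card_gt0P.
have K1 : #|K :\ a| = #|K|.-1 by rewrite (cardsD1 a K) Ha.
have [b Hb] : exists b, b \in K :\ a.
  by apply/card_gt0P; rewrite K1; move: K0 H1; case: #|K| => [|[|]].
have K2 : #|K :\ a :\ b| = #|K|.-2 by move: (cardsD1 b (K :\ a)); rewrite Hb K1 /=; lia.
have Hba : b != a by move: Hb; rewrite !inE => /andP[].
case: (eqVneq #|K :\ a :\ b| 1%N) => Hc.
  move/eqP/cards1P: Hc => [c Hc].
  have Hc' : c \in K :\ a :\ b by rewrite Hc set11.
  have Hca : c != a by move: Hc'; rewrite !inE => /and3P[].
  have Hcb : c != b by move: Hc'; rewrite !inE => /and3P[].
  exists (fun x => if x == c then -2 else 1); split.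
    by move=> x; case: (x == c).
  rewrite (big_setD1 a Ha) (big_setD1 b Hb) Hc big_set1 eqxx.
  rewrite eq_sym (negbTE Hca) eq_sym (negbTE Hcb).
  by [].
have Hlt : (#|K :\ a :\ b| < m)%N by rewrite K2; move: K0 HK; case: #|K| => [|[|k]] //=; lia.
have [F [HF1 HF2]] := IH (K :\ a :\ b) Hlt Hc.
exists (fun x => if x == a then 1 else if x == b then -1 else F x); split.
  by move=> x; case: (x == a) => //; case: (x == b).
rewrite (big_setD1 a Ha) (big_setD1 b Hb) eqxx (negbTE Hba) eqxx.
rewrite (eq_bigr F) ?HF2 ?addr0 ?addrA ?subrr //.
by move=> x; rewrite !inE => /and3P[Hxb Hxa _]; rewrite (negbTE Hxb) (negbTE Hxa).
Qed.

Lemma greedy (A : finType) (K : {set A}) (w : A -> nat) :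
  {in K, forall a, (w a <= 6)%N} ->
  exists F : A -> int, (forall a, F a = 1 \/ F a = -1) /\
    `|\sum_(a in K) F a *+ w a| <= 6.
Proof.
have [m] := ubnP #|K|; elim: m K => // m IH K; rewrite ltnS => HK Hw.
case: (posnP #|K|) => [/eqP|] K0.
  exists (fun _ => 1); split; first by left.
  by rewrite cards_eq0 in K0; rewrite (eqP K0) big_set0.
have [a Ha] : exists a, a \in K by apply/card_gt0P.
have K1 : #|K :\ a| = #|K|.-1 by rewrite (cardsD1 a K) Ha.
have Hlt : (#|K :\ a| < m)%N by rewrite K1; move: K0 HK; case: #|K| => //=; lia.
have [F [HF1 HF2]] := IH (K :\ a) Hlt (fun x Hx => Hw x (subsetP (subsetDl K [set a]) x Hx)).
set s := \sum_(x in K :\ a) F x *+ w x in HF2.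
exists (fun x => if x == a then (if 0 <= s then -1 else 1) else F x); split.
  move=> x; case: (x == a) => /=; last exact: HF1.
  by case: (0 <= s); [apply: or_intror | apply: or_introl].
rewrite (big_setD1 a Ha) eqxx (eq_bigr (fun x => F x *+ w x)); last first.
  by move=> x; rewrite !inE => /andP[/negbTE ->].
rewrite -/s; have := Hw a Ha; move: HF2; rewrite !ler_norml.
case: (lerP 0 s) => Hs; rewrite ?mulNrn -[1 *+ w a]/((w a)%:R) natz /=; lia.
Qed.

Lemma choose_u (s : int) : `|s| <= 3 -> exists u0 u1 u2 : int,
  [/\ u0 != 0 /\ `|u0| < 3, u1 != 0 /\ `|u1| < 3, u2 != 0 /\ `|u2| < 3 & u0 + u1 + u2 = - s].
Proof.
rewrite ler_norml => Hs.
have : s = -3 \/ s = -2 \/ s = -1 \/ s = 0 \/ s = 1 \/ s = 2 \/ s = 3 by lia.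
case=> [->|[->|[->|[->|[->|[->|->]]]]]].
- by exists 1, 1, 1.
- by exists 2, 1, (-1).
- by exists 1, 1, (-1).
- by exists 1, 1, (-2).
- by exists (-1), (-1), 1.
- by exists (-2), (-1), 1.
- by exists (-1), (-1), (-1).
Qed.
Section Cyc.
Variable n : nat.
Local Notation N := n.+2.
Local Notation Z := 'I_N.

Lemma valMn (x : Z) k : val (x *+ k) = ((val x * k) %% N)%N.
Proof. by rewrite Zp_mulrn. Qed.

Lemma Zmul0 (t : Z) k : coprime N k -> t *+ k = 0 -> t = 0.
Proof.
move=> Hc Ht; have : (N %| val t * k)%N.
  by rewrite /dvdn -valMn Ht.
rewrite Gauss_dvdl // => Hd; apply: val_inj => /=.
case: (posnP (val t)) => // Hp; have := dvdn_leq Hp Hd.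
by rewrite leqNgt ltn_ord.
Qed.

Lemma eq_addr_same (x a : Z) : (x == x + a) = (a == 0).
Proof. by rewrite -{1}[x]addr0 (inj_eq (addrI x)) eq_sym. Qed.

Variable B : {set {set Z}}.
Hypothesis B3 : forall b, b \in B -> #|b| = 3%N.
Hypothesis Buniq : forall x y : Z, x != y -> #|[set b in B | (x \in b) && (y \in b)]| = 1%N.
Hypothesis Btr1 : forall b, b \in B -> [set z + 1 | z in b] \in B.
Hypothesis Nodd : odd N.

Definition tr (t : Z) (b : {set Z}) := [set z + t | z in b].

Lemma mem_tr t (b : {set Z}) z : (z \in tr t b) = (z - t \in b).
Proof.
apply/imsetP/idP => [[y Hy ->]|H]; first by rewrite addrK.
by exists (z - t); rewrite ?subrK.
Qed.

Lemma tr_tr s t (b : {set Z}) : tr s (tr t b) = tr (t + s) b.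
Proof.
apply/setP => z; rewrite !mem_tr.
by have -> : z - (t + s) = z - s - t by ring.
Qed.

Lemma tr0 (b : {set Z}) : tr 0 b = b.
Proof. by apply/setP => z; rewrite mem_tr subr0. Qed.

Lemma trB t (b : {set Z}) : b \in B -> tr t b \in B.
Proof.
move=> Hb; rewrite -(natr_Zp t); elim: (val t) => [|k IH]; first by rewrite tr0.
by rewrite mulrSr -tr_tr; apply: Btr1.
Qed.

Definition blk x y := odflt set0 [pick b in B | (x \in b) && (y \in b)].

Lemma blk_set x y : x != y -> [set b in B | (x \in b) && (y \in b)] = [set blk x y].
Proof.
move=> Hxy; have /eqP/cards1P [b0 Hb0] := Buniq Hxy.
rewrite Hb0; congr [set _]; rewrite /blk; case: pickP => [b Hb | H] /=.
  by apply/esym/set1P; rewrite -Hb0 inE.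
have : b0 \in [set b in B | (x \in b) && (y \in b)] by rewrite Hb0 set11.
by rewrite inE H.
Qed.

Lemma blkP x y : x != y -> [/\ blk x y \in B, x \in blk x y & y \in blk x y].
Proof.
move=> Hxy; have : blk x y \in [set b in B | (x \in b) && (y \in b)] by rewrite blk_set // set11.
by rewrite inE => /and3P[].
Qed.

Lemma blk_uniq x y b : x != y -> b \in B -> x \in b -> y \in b -> b = blk x y.
Proof.
by move=> Hxy Hb Hx Hy; apply/set1P; rewrite -blk_set // inE Hb Hx Hy.
Qed.

Lemma blk_tr x y t : x != y -> blk (x + t) (y + t) = tr t (blk x y).
Proof.
move=> Hxy; have [H1 H2 H3] := blkP Hxy.
apply/esym/blk_uniq; first by rewrite (inj_eq (addIr t)).
- exact: trB.
- by rewrite mem_tr addrK.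
- by rewrite mem_tr addrK.
Qed.

Definition od (b : {set Z}) := [set p in setX b b | p.1 != p.2].
Definition D (b : {set Z}) := [set p.2 - p.1 | p in od b].

Lemma memD (b : {set Z}) (d : Z) : reflect (exists x y, [/\ x \in b, y \in b, x != y & d = y - x]) (d \in D b).
Proof.
apply: (iffP imsetP) => [[[x y]]|[x [y [Hx Hy Hxy ->]]]].
  by rewrite !inE /= => /andP[/andP[Hx Hy] Hxy] ->; exists x, y.
by exists (x, y) => //; rewrite !inE /= Hx Hy Hxy.
Qed.

Lemma card_od (b : {set Z}) : #|b| = 3%N -> #|od b| = 6%N.
Proof.
move=> Hb.
have := cardsID [set p : Z * Z | p.1 != p.2] (setX b b).
have -> : setX b b :&: [set p : Z * Z | p.1 != p.2] = od b.
  by apply/setP => p; rewrite !inE.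
have -> : setX b b :\: [set p : Z * Z | p.1 != p.2] = [set (x, x) | x in b].
  apply/setP => [[u v]]; rewrite !inE /= negbK.
  apply/idP/imsetP => [/andP[/eqP <- /andP[Hu Hv]]|[x Hx [-> ->]]].
    by exists u.
  by rewrite eqxx Hx.
rewrite (@card_imset _ _ (fun x : Z => (x, x))); last by move=> x y [].
rewrite cardsX Hb => /(congr1 (subn^~ 3%N)); rewrite addnK => H; exact: H.
Qed.

Lemma card_D_le (b : {set Z}) : #|b| = 3%N -> (#|D b| <= 6)%N.
Proof. by move=> Hb; rewrite -(card_od Hb) leq_imset_card. Qed.

Lemma trin (b : {set Z}) t z : tr t b = b -> z \in b -> z + t \in b.
Proof. by move=> H Hz; rewrite -H mem_tr addrK. Qed.

Lemma card3 (x y z : Z) : x != y -> x != z -> y != z -> #|[set x; y; z]| = 3%N.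
Proof.
move=> Hxy Hxz Hyz; rewrite -setUA !cardsU1 cards1 !inE.
by rewrite (negbTE Hxy) (negbTE Hxz) (negbTE Hyz).
Qed.

Lemma inv3 (b : {set Z}) t : b \in B -> tr t b = b -> t != 0 -> t *+ 3 = 0.
Proof.
move=> Hb Ht Ht0.
have [p Hp] : exists p, p \in b by apply/card_gt0P; rewrite B3.
have H1 := trin Ht Hp; have H2 := trin Ht H1; have H3 := trin Ht H2.
have t2 : t + t != 0.
  apply: contra Ht0 => /eqP H; apply/eqP; apply: (@Zmul0 t 2); first by rewrite coprimen2.
  by rewrite mulr2n.
have Eb : b = [set p; p + t; p + t + t].
  apply/eqP; rewrite eq_sym eqEcard (B3 Hb) card3 //.
  - rewrite andbT; apply/subsetP => u; rewrite !inE => /orP[/orP[]|]/eqP->; by [].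
  - by rewrite eq_addr_same.
  - by rewrite -addrA eq_addr_same.
  - by rewrite eq_addr_same.
move: H3; rewrite {1}Eb !inE => /orP[/orP[]|]/eqP H.
- have E : t *+ 3 = (p + t + t + t) - p by ring.
  by rewrite E H subrr.
- have E : t + t = (p + t + t + t) - (p + t) by ring.
  by move: t2; rewrite E H subrr eqxx.
- have E : t = (p + t + t + t) - (p + t + t) by ring.
  by move: Ht0; rewrite E H subrr eqxx.
Qed.

Lemma diff_inj (b : {set Z}) x y x' y' : b \in B -> (forall t, tr t b = b -> t = 0) ->
  x \in b -> y \in b -> x' \in b -> y' \in b -> x != y -> x' != y' ->
  y - x = y' - x' -> x = x'.
Proof.
move=> Hb Hinv Hx Hy Hx' Hy' Hxy Hxy' E.
have : tr (x' - x) b = b.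
  have H1 : x' \in tr (x' - x) b.
    by rewrite mem_tr; have -> : x' - (x' - x) = x by ring.
  have H2 : y' \in tr (x' - x) b.
    rewrite mem_tr; have -> : y' - (x' - x) = (y' - x') + x by ring.
    by rewrite -E subrK.
  by rewrite (blk_uniq Hxy' (trB _ Hb) H1 H2) -(blk_uniq Hxy' Hb Hx' Hy').
move/Hinv => H; apply/esym; exact: subr0_eq.
Qed.

Lemma no_inv_card (b : {set Z}) : b \in B -> (forall t, tr t b = b -> t = 0) -> #|D b| = 6%N.
Proof.
move=> Hb Hinv; rewrite card_in_imset ?card_od ?B3 //.
move=> [x y] [x' y']; rewrite !inE /= => /andP[/andP[Hx Hy] Hxy] /andP[/andP[Hx' Hy'] Hxy'] E.
have Ex := diff_inj Hb Hinv Hx Hy Hx' Hy' Hxy Hxy' E.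
rewrite -Ex in E *; congr (_, _); exact: (addIr (-x)).
Qed.

Lemma D_tr t (b : {set Z}) : D (tr t b) = D b.
Proof.
apply/setP => d; apply/memD/memD => [][x [y [Hx Hy Hxy ->]]].
  exists (x - t), (y - t); rewrite -!mem_tr (inj_eq (addIr _)); split => //; ring.
exists (x + t), (y + t); rewrite !mem_tr !addrK (inj_eq (addIr _)); split => //; ring.
Qed.

Definition C d := D (blk 0 d).
Definition P : {set Z} := [set~ 0].
Definition K := C @: P.

Lemma D_blk x y : x != y -> D (blk x y) = C (y - x).
Proof.
move=> Hxy; have Hd : 0 != y - x by rewrite eq_sym subr_eq0 eq_sym.
by rewrite /C -(D_tr x (blk 0 (y - x))) -(blk_tr x Hd) add0r subrK.
Qed.

Lemma C_part d e : d != 0 -> e \in C d -> e != 0 /\ C e = C d.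
Proof.
move=> Hd /memD [x [y [Hx Hy Hxy ->]]]; split; first by rewrite subr_eq0 eq_sym.
have [Hb _ _] : [/\ blk 0 d \in B, 0 \in blk 0 d & d \in blk 0 d] by apply: blkP; rewrite eq_sym.
by rewrite -D_blk // -(blk_uniq Hxy Hb Hx Hy).
Qed.

Lemma inP d : (d \in P) = (d != 0).
Proof. by rewrite /P in_setC1. Qed.

Lemma C_self d : d != 0 -> d \in C d.
Proof.
move=> Hd; have Hd' : 0 != d by rewrite eq_sym.
have [_ H0 H1] := blkP Hd'.
by apply/memD; exists 0, d; rewrite subr0.
Qed.

Lemma part_sum (G : {set Z} -> int) :
  \sum_(d in P) G (C d) = \sum_(X in K) G X *+ #|X|.
Proof.
rewrite (partition_big_imset C); apply: eq_bigr => X /imsetP[d0 Hd0 ->].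
have Hd0' : d0 != 0 by rewrite -inP.
transitivity (\sum_(d in C d0) G (C d0)); last by rewrite sumr_const.
apply: eq_big => [d|d /andP[_ /eqP ->]] //.
apply/idP/idP => [/andP[Hd /eqP <-]|Hd].
  by apply: C_self; rewrite -inP.
have [Hd1 Hd2] := C_part Hd0' Hd.
by rewrite inP Hd1 Hd2 eqxx.
Qed.

Lemma dc x (phi : {set Z} -> int) :
  (\sum_(b in B | x \in b) phi b) *+ 2 = \sum_(y | y != x) phi (blk x y).
Proof.
transitivity (\sum_(y | y != x) \sum_(b | (b \in B) && ((x \in b) && (y \in b))) phi b); last first.
  apply: eq_bigr => y Hy; symmetry.
  rewrite (eq_bigl (fun b => b \in [set blk x y])); first by rewrite big_set1.
  by move=> b; rewrite -blk_set ?(eq_sym x) // inE.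
rewrite (exchange_big_dep (fun b => (b \in B) && (x \in b))) /=; last first.
  by move=> y b _ /and3P[-> -> _].
rewrite -sumrMnl; apply: eq_bigr => b /andP[Hb Hx].
transitivity (\sum_(y in b :\ x) phi b); last first.
  by apply: eq_bigl => y; rewrite !inE Hb Hx /=.
rewrite sumr_const; have := cardsD1 x b; rewrite (B3 Hb) Hx /= => H.
by case: H => ->.
Qed.

Lemma point_sum x (G : {set Z} -> int) :
  (\sum_(b in B | x \in b) G (D b)) *+ 2 = \sum_(X in K) G X *+ #|X|.
Proof.
rewrite dc -part_sum.
rewrite (eq_bigr (fun y => G (C (y - x)))); last by move=> y Hy; rewrite D_blk // eq_sym.
rewrite (reindex_inj (addIr x)) /=.
apply: eq_big => [d|d _]; last by rewrite addrK.
by rewrite inP -subr_eq0 addrK.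
Qed.

Lemma case1 : N != 7%N -> coprime N 3 -> exists f : {set Z} -> int,
  (forall b, b \in B -> f b != 0 /\ `|f b| < 3) /\
  (forall x, \sum_(b in B | x \in b) f b = 0).
Proof.
move=> N7 c3.
have noinv b : b \in B -> forall t, tr t b = b -> t = 0.
  move=> Hb t Ht; case: (eqVneq t 0) => // Ht0.
  exact: Zmul0 c3 (inv3 Hb Ht Ht0).
have sz X : X \in K -> #|X| = 6%N.
  move=> /imsetP[d Hd ->]; have Hd' : 0 != d by rewrite eq_sym -inP.
  have [Hb _ _] := blkP Hd'.
  by apply: no_inv_card => //; apply: noinv.
have cK : #|K| != 1%N.
  have := part_sum (fun _ => 1).
  rewrite sumr_const (eq_bigr (fun _ => 1 *+ 6)); last by move=> X HX; rewrite (sz X HX).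
  rewrite sumr_const /P cardsC1 card_ord -mulrnA => /eqP; rewrite eqr_nat => /eqP.
  by move: N7; lia.
have [F [HF1 HF2]] := zero_sum_choice cK.
exists (fun b => F (D b)); split; first by move=> b _; exact: HF1.
move=> x; have H := point_sum x F.
rewrite [Y in _ = Y](eq_bigr (fun X => F X *+ 6)) in H; last by move=> X HX; rewrite (sz X HX).
rewrite sumrMnl HF2 mul0rn in H.
by move/eqP: H; rewrite mulrn_eq0 /= => /eqP.
Qed.

Definition res (z : Z) := (val z %% 3)%N.

Lemma res_lt z : (res z < 3)%N.
Proof. by rewrite /res ltn_pmod. Qed.

Lemma res0 : res 0 = 0%N.
Proof. by []. Qed.

Lemma resD (h3 : (3 %| N)%N) x y : res (x + y) = ((res x + res y) %% 3)%N.
Proof. by rewrite /res /= (modn_dvdm _ h3) modnDm. Qed.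

Lemma count_res M r : (r < 3)%N -> (\sum_(0 <= y < 3 * M) ((y %% 3) == r) = M)%N.
Proof.
move=> Hr; elim: M => [|M IH]; first by rewrite muln0 big_geq.
have -> : (3 * M.+1 = (3 * M).+3)%N by rewrite mulnS; lia.
rewrite !big_nat_recr //= IH.
have e0 : ((3 * M) %% 3 = 0)%N by rewrite modnMr.
have e1 : ((3 * M).+1 %% 3 = 1)%N by rewrite -addn1 mulnC modnMDl.
have e2 : ((3 * M).+2 %% 3 = 2)%N by rewrite -addn2 mulnC modnMDl.
rewrite e0 e1 e2; move: Hr {IH}; case: r => [|[|[|]]] //= _; lia.
Qed.

Lemma card_res (h3 : (3 %| N)%N) r : (r < 3)%N -> (\sum_(y : Z) (res y == r) = N %/ 3)%N.
Proof.
move=> Hr; rewrite /res -(big_mkord xpredT (fun i => ((i %% 3)%N == r : nat))).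
by rewrite -{1}(divnK h3) mulnC count_res.
Qed.

Lemma pair_sum (psi : Z -> Z -> nat) :
  (\sum_(b in B) \sum_(x in b) \sum_(y in b | y != x) psi x y =
   \sum_(x : Z) \sum_(y | y != x) psi x y)%N.
Proof.
rewrite (exchange_big_dep xpredT) //=; apply: eq_bigr => x _.
rewrite (exchange_big_dep (fun y => y != x)) /=; last by move=> b y _ /andP[].
apply: eq_bigr => y Hy.
transitivity (\sum_(b in [set b in B | (x \in b) && (y \in b)]) psi x y).
  by apply: eq_bigl => b; rewrite !inE Hy andbT andbA.
by rewrite sum_nat_const Buniq ?mul1n // eq_sym.
Qed.

Lemma block_count (p q r : Z) : p != q -> p != r -> q != r ->
  ((4 %| \sum_(x in [set p; q; r]) \sum_(y in [set p; q; r]) (res x != res y))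
   \/ [/\ res p != res q, res p != res r & res q != res r])%N.
Proof.
move=> Hpq Hpr Hqr; rewrite -setUA.
have Hp : p \notin q |: [set r] by rewrite !inE negb_or Hpq Hpr.
have Hq : q \notin [set r] by rewrite inE.
do 3!rewrite ?(big_setU1 _ Hp) ?(big_setU1 _ Hq) ?big_set1 /=.
have := res_lt p; have := res_lt q; have := res_lt r.
move: (res p) (res q) (res r) => a b c.
case: a => [|[|[|a]]] //; case: b => [|[|[|b]]] //; case: c => [|[|[|c]]] // _ _ _;
  first [by left | by right].
Qed.

Lemma res_of_3 (h9 : (9 %| N)%N) t : t *+ 3 = 0 -> res t = 0%N.
Proof.
move=> H3; have := congr1 val H3; rewrite valMn /= => Hm.
have HN : (N %| t * 3)%N by rewrite /dvdn Hm.
have := dvdn_trans h9 HN; rewrite -[9%N]/(3 * 3)%N dvdn_pmul2r // => H.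
by apply/eqP.
Qed.

Lemma arith18 M : (M %% 18 = 9)%N -> ~~ (4 %| M * (M - M %/ 3))%N.
Proof.
move=> h; have Ek : M = (3 * (M %/ 3))%N by rewrite mulnC divnK //; rewrite /dvdn; apply/eqP; lia.
set k := (M %/ 3)%N in Ek *.
have ok : odd k by move: (modn2 k); case: (odd k) => //= ?; lia.
have ok2 : odd (k * k) by rewrite oddM ok.
have -> : (M * (M - k) = 6 * (k * k))%N.
  have E2 : (3 * k - k = 2 * k)%N by lia.
  by rewrite Ek E2; ring.
have : ((k * k) %% 2 = 1)%N by rewrite modn2 ok2.
set kk := (k * k)%N; clearbody k kk; move=> H; apply/negP; lia.
Qed.

Lemma exists_dist (h18 : (N %% 18 = 9)%N) : exists p q r,
  [/\ [set p; q; r] \in B, p != q, p != r & q != r] /\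
  [/\ res p != res q, res p != res r & res q != res r].
Proof.
have h3 : (3 %| N)%N by rewrite /dvdn; apply/eqP; lia.
case: (classic (exists p q r,
  [/\ [set p; q; r] \in B, p != q, p != r & q != r] /\
  [/\ res p != res q, res p != res r & res q != res r])) => // Hno; exfalso.
pose c (b : {set Z}) := (\sum_(x in b) \sum_(y in b) (res x != res y))%N.
have h4 b : b \in B -> (4 %| c b)%N.
  move=> Hb; have : (2 < #|b|)%N by rewrite (B3 Hb).
  case/card_gt2P => x [y [z [[Hx Hy Hz] [Hxy Hyz Hzx]]]].
  have Hxz : x != z by rewrite eq_sym.
  have Eb : b = [set x; y; z].
    apply/eqP; rewrite eq_sym eqEcard (B3 Hb) card3 //.
    rewrite andbT; apply/subsetP => u; rewrite !inE => /orP[/orP[]|]/eqP->; by [].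
  rewrite /c Eb; case: (block_count Hxy Hxz Hyz) => // H.
  by exfalso; apply: Hno; exists x, y, z; split; [rewrite -Eb; split | exact: H].
have tot : (\sum_(b in B) c b = N * (N - N %/ 3))%N.
  transitivity (\sum_(b in B) \sum_(x in b) \sum_(y in b | y != x) (res x != res y))%N.
    apply: eq_bigr => b _; apply: eq_bigr => x Hx.
    by rewrite (bigD1 x Hx) /= eqxx add0n.
  rewrite pair_sum.
  transitivity (\sum_(x in [set: Z]) (N - N %/ 3))%N; last by rewrite sum_nat_const cardsT card_ord.
  apply: eq_big => [x|x _]; first by rewrite inE.
  rewrite [X in (X = _)%N](_ : _ = \sum_y (res x != res y))%N; last first.
    by rewrite [RHS](bigD1 x) //= eqxx add0n.
  have e : (\sum_y (res x != res y) + \sum_y (res y == res x) = N)%N.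
    rewrite -big_split /= (eq_bigr (fun _ => 1%N)); last by move=> y _; rewrite eq_sym; case: eqP.
    by rewrite sum1_card card_ord.
  move: e; rewrite card_res // ?res_lt //; move: (\sum_y _)%N => s1 e.
  by rewrite -{1}e addnK.
have : (4 %| N * (N - N %/ 3))%N by rewrite -tot; apply: dvdn_sum => b Hb; exact: h4.
by apply/negP; apply: arith18.
Qed.

Lemma res_distinct (i k l dd aa : nat) : i = ((k + dd) %% 3)%N -> i = ((l + aa) %% 3)%N ->
  (i < 3)%N -> (k < 3)%N -> (l < 3)%N -> dd != 0%N -> aa != 0%N -> dd != aa ->
  (dd < 3)%N -> (aa < 3)%N -> [/\ i != k, i != l & k != l].
Proof.
move=> e1 e2 L1 L2 L3 /eqP R1 /eqP R2 /eqP R3 L4 L5.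
split; apply/eqP; lia.
Qed.

Lemma half_bound (s : int) : `|s + s| <= 6 -> `|s| <= 3.
Proof. rewrite !ler_norml; lia. Qed.

Lemma final_lin (t s : int) : t + t = s + s -> - s + t = 0.
Proof. lia. Qed.

Lemma U_sum (u0 u1 u2 : int) i k l : (i < 3)%N -> (k < 3)%N -> (l < 3)%N ->
  i != k -> i != l -> k != l ->
  let U m := if m == 0%N then u0 else if m == 1%N then u1 else u2 in
  U i + (U k + U l) = u0 + u1 + u2.
Proof.
case: i => [|[|[|i]]] //; case: k => [|[|[|k]]] //; case: l => [|[|[|l]]] // _ _ _ _ _ _ /=;
  ring.
Qed.

Lemma case2 : (N %% 18 = 9)%N -> exists f : {set Z} -> int,
  (forall b, b \in B -> f b != 0 /\ `|f b| < 3) /\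
  (forall x, \sum_(b in B | x \in b) f b = 0).
Proof.
move=> h18.
have h3 : (3 %| N)%N by rewrite /dvdn; apply/eqP; lia.
have h9 : (9 %| N)%N by rewrite /dvdn; apply/eqP; lia.
have [p [q [r [[HB Hpq Hpr Hqr] [Rpq Rpr Rqr]]]]] := exists_dist h18.
set d0 := q - p; set a := r - p.
set B0 := tr (-p) [set p; q; r].
have EB0 : B0 = [set 0; d0; a] by rewrite /B0 /tr !imsetU !imset_set1 subrr.
have B0B : B0 \in B by apply: trB.
have eq_q : res q = ((res d0 + res p) %% 3)%N by rewrite -resD // subrK.
have eq_r : res r = ((res a + res p) %% 3)%N by rewrite -resD // subrK.
have Lp := res_lt p; have Ld := res_lt d0; have La := res_lt a.
have Rd0 : res d0 != 0%N.
  apply/eqP => H; move: Rpq; rewrite eq_q H add0n modn_small // eqxx //.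
have Ra : res a != 0%N.
  apply/eqP => H; move: Rpr; rewrite eq_r H add0n modn_small // eqxx //.
have Rda : res d0 != res a.
  by apply/eqP => H; move: Rqr; rewrite eq_q eq_r H eqxx.
have d0n : 0 != d0 by apply: contra Rd0 => /eqP <-.
have an : 0 != a by apply: contra Ra => /eqP <-.
have d0a : d0 != a by apply: contra Rda => /eqP ->.
have H0 : 0 \in B0 by rewrite EB0 !inE eqxx.
have Hd0 : d0 \in B0 by rewrite EB0 !inE eqxx orbT.
have Ha : a \in B0 by rewrite EB0 !inE eqxx orbT.
have noinv0 t : tr t B0 = B0 -> t = 0.
  move=> Ht; case: (eqVneq t 0) => // Ht0.
  have Rt := res_of_3 h9 (inv3 B0B Ht Ht0).
  have := trin Ht H0; rewrite add0r EB0 !inE => /orP[/orP[]|]/eqP Et //.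
  - by move: Rd0; rewrite -Et Rt.
  - by move: Ra; rewrite -Et Rt.
pose j (b : {set Z}) := odflt 0 [pick y in b | y + d0 \in b].
have j_tr t : j (tr t B0) = t.
  rewrite /j; case: pickP => [y /andP[Hy Hy'] | H] /=.
    rewrite mem_tr in Hy; rewrite mem_tr in Hy'.
    have Hne : y - t != y + d0 - t.
      by rewrite (_ : y + d0 - t = (y - t) + d0); [rewrite eq_addr_same eq_sym | ring].
    have Ed : d0 - 0 = (y + d0 - t) - (y - t) by ring.
    have E := diff_inj B0B noinv0 H0 Hd0 Hy Hy' d0n Hne Ed.
    by apply/eqP; rewrite -subr_eq0 -E.
  move: (H t); rewrite mem_tr subrr H0 /= mem_tr.
  have -> : t + d0 - t = d0 by ring.
  by rewrite Hd0.
have DB0 b : b \in B -> D b = D B0 -> exists t, b = tr t B0.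
  move=> Hb HD; have : d0 \in D B0 by apply/memD; exists 0, d0; rewrite subr0.
  rewrite -HD => /memD [x [y [Hx Hy Hxy Ed]]]; exists x.
  have Hx' : x \in tr x B0 by rewrite mem_tr subrr.
  have Hy' : y \in tr x B0 by rewrite mem_tr -Ed.
  by rewrite (blk_uniq Hxy Hb Hx Hy) (blk_uniq Hxy (trB _ B0B) Hx' Hy').
have orbit_sum x (U : nat -> int) :
    \sum_(b | ((b \in B) && (x \in b)) && (D b == D B0)) U (res (j b)) =
    \sum_(e in B0) U (res (x - e)).
  transitivity (\sum_(b in [set tr (x - e) B0 | e in B0]) U (res (j b))).
    apply: eq_bigl => b; apply/idP/imsetP.
      move=> /andP[/andP[Hb Hx] /eqP HD]; have [t Et] := DB0 b Hb HD.
      exists (x - t); first by move: Hx; rewrite Et mem_tr.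
      by rewrite Et; congr tr; ring.
    move=> [e He ->]; rewrite trB // mem_tr D_tr eqxx andbT /=.
    by have -> : x - (x - e) = e by ring.
  rewrite big_imset /=; last first.
    move=> e e' He He' E; have := congr1 j E; rewrite !j_tr => /addrI.
    exact: oppr_inj.
  by apply: eq_bigr => e _; rewrite j_tr.
have B0sum x (u0 u1 u2 : int) :
    let U m := if m == 0%N then u0 else if m == 1%N then u1 else u2 in
    \sum_(e in B0) U (res (x - e)) = u0 + u1 + u2.
  move=> U; rewrite EB0 -setUA.
  have N1 : 0 \notin d0 |: [set a] by rewrite !inE negb_or d0n an.
  have N2 : d0 \notin [set a] by rewrite inE.
  rewrite (big_setU1 _ N1) (big_setU1 _ N2) big_set1 subr0.
  have ex1 : res x = ((res (x - d0)%R + res d0) %% 3)%N by rewrite -resD // subrK.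
  have ex2 : res x = ((res (x - a)%R + res a) %% 3)%N by rewrite -resD // subrK.
  have L1 := res_lt x; have L2 := res_lt (x - d0); have L3 := res_lt (x - a).
  move: ex1 ex2 L1 L2 L3 Rd0 Ra Rda Ld La.
  move: (res x) (res (x - d0)%R) (res (x - a)%R) (res d0) (res a) => i k l dd aa.
  move=> e1 e2 L1 L2 L3 R1 R2 R3 L4 L5.
  have [D1 D2 D3] := res_distinct e1 e2 L1 L2 L3 R1 R2 R3 L4 L5.
  exact: U_sum.
pose w (X : {set Z}) := if X == D B0 then 0%N else #|X|.
have Hw : {in K, forall X, (w X <= 6)%N}.
  move=> X /imsetP[d Hd ->]; rewrite /w; case: eqP => // _.
  have Hd' : 0 != d by rewrite eq_sym -inP.
  have [Hb _ _] := blkP Hd'.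
  exact: card_D_le (B3 Hb).
have [F [HF1 HF2]] := greedy Hw.
set S := \sum_(X in K) F X *+ w X in HF2.
pose F' (X : {set Z}) := if X == D B0 then 0 else F X.
have S2 x : (\sum_(b in B | x \in b) F' (D b)) *+ 2 = S.
  rewrite point_sum; apply: eq_bigr => X _; rewrite /F' /w.
  by case: eqP => _ //; rewrite mul0rn mulr0n.
set s := \sum_(b in B | 0 \in b) F' (D b).
have Hs : `|s| <= 3.
  by move: HF2; rewrite -(S2 0) -/s mulr2n; apply: half_bound.
have [u0 [u1 [u2 [Hu0 Hu1 Hu2 Hsum]]]] := choose_u Hs.
pose U m := if m == 0%N then u0 else if m == 1%N then u1 else u2.
exists (fun b => if D b == D B0 then U (res (j b)) else F (D b)); split.
  move=> b _; case: ifP => _.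
    by rewrite /U; case: ifP => _ //; case: ifP.
  by case: (HF1 (D b)) => ->.
move=> x; rewrite (bigID (fun b => D b == D B0)) /=.
rewrite (eq_bigr (fun b => U (res (j b)))); last by move=> b /andP[_ ->].
rewrite orbit_sum B0sum.
rewrite (eq_bigr (fun b => F' (D b))); last first.
  by move=> b /andP[_ /negbTE H]; rewrite H /F' H.
have E : \sum_(b | ((b \in B) && (x \in b)) && ~~ (D b == D B0)) F' (D b) =
         \sum_(b in B | x \in b) F' (D b).
  rewrite [RHS](bigID (fun b => D b == D B0)) /= [in RHS]big1 ?add0r //.
  by move=> b /andP[_ /eqP ->]; rewrite /F' eqxx.
rewrite E Hsum.
have := S2 x; rewrite -(S2 0) -/s !mulr2n; apply: final_lin.
Qed.
End Cyc.

Lemma ordS1 n (x : 'I_n.+2) : ordS x = x + 1.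
Proof. by apply: val_inj => /=; rewrite (@modn_small 1) // addn1. Qed.

Lemma memg (T : finType) (V : finType) (g : T -> V) (h : V -> T) (b : {set T}) z :
  cancel g h -> cancel h g -> (z \in g @: b) = (h z \in b).
Proof. by move=> gK hK; rewrite (can2_imset_pre _ gK hK) inE. Qed.

Local Close Scope ring_scope.

Theorem mainTheorem5 (T : finType) (v : nat) (B : {set {set T}}) :
  #|T| = v -> v != 7 -> (v %% 6 = 1 \/ v %% 18 = 9) ->
  is_STS B -> is_cyclic_design v B ->
  exists f : {set T} -> int, zero_sum_flow B 3 f.
Proof.
move=> HT v7 Hv [H3 Huniq] [g [h [gK [hK Hcyc]]]].
move: g h gK hK Hcyc; case: v HT v7 Hv => [|[|n]] HT v7 Hv g h gK hK Hcyc.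
- by case: Hv.
- exists (fun _ => 1%R); split => // x; apply: big1 => b /andP[Hb _].
  by have := max_card (mem b); rewrite H3 // HT.
set B' := [set g @: b | b : {set T} in B].
have gI := can_inj gK.
have B3' : forall b, b \in B' -> #|b| = 3%N.
  by move=> _ /imsetP[b Hb ->]; rewrite card_imset // H3.
have Buniq' : forall x y : 'I_n.+2, x != y ->
    #|[set b in B' | (x \in b) && (y \in b)]| = 1.
  move=> x y Hxy.
  have -> : [set b in B' | (x \in b) && (y \in b)] =
            [set g @: b | b : {set T} in [set b : {set T} in B | (h x \in b) && (h y \in b)]].
    apply/setP => b'; rewrite inE; apply/andP/imsetP.
      move=> [/imsetP[b Hb ->]]; rewrite !(memg _ _ gK hK) => Hxy'.
      by exists b; rewrite // inE Hb.
    move=> [b]; rewrite inE => /andP[Hb Hxy'] ->.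
    by rewrite imset_f // !(memg _ _ gK hK).
  rewrite card_imset; last exact: imset_inj.
  by apply: Huniq; rewrite (inj_eq (can_inj hK)).
have Btr' : forall b, b \in B' -> [set (z + 1)%R | z in b] \in B'.
  move=> _ /imsetP[b Hb ->].
  have Hc := Hcyc b Hb.
  have -> : [set (z + 1)%R | z in g @: b] = g @: [set h (ordS (g x)) | x in b].
    apply/setP => z; rewrite (memg _ _ gK hK).
    apply/imsetP/imsetP.
      move=> [y]; rewrite (memg _ _ gK hK) => Hy ->.
      by exists (h y) => //; rewrite ordS1 hK.
    move=> [x Hx /(can_inj hK) ->]; exists (g x); first by rewrite imset_f.
    by rewrite ordS1.
  exact: imset_f.
have Nodd : odd n.+2.
  by move: (modn2 n.+2); case: (odd n.+2) => //= ?; case: Hv => ?; lia.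
have [f' [Hf1 Hf2]] : exists f' : {set 'I_n.+2} -> int,
  (forall b, b \in B' -> (f' b != 0)%R /\ (`|f' b| < 3)%R) /\
  (forall x, (\sum_(b in B' | x \in b) f' b = 0)%R).
  case: Hv => Hv.
    apply: (case1 B3' Buniq' Btr' Nodd) => //.
    rewrite coprime_sym prime_coprime //; apply/negP => /dvdnP [k Hk].
    by move: Hv; rewrite Hk; lia.
  exact: (case2 B3' Buniq' Btr' Nodd).
exists (fun b : {set T} => f' (g @: b)); split.
  by move=> b Hb; apply: Hf1; rewrite imset_f.
move=> x.
transitivity (\sum_(b in [set b : {set T} in B | x \in b]) f' (g @: b))%R.
  by apply: eq_bigl => b; rewrite inE.
rewrite -(big_imset _ (in2W (imset_inj gI))) /= -[X in _ = X](Hf2 (g x)).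
apply: eq_bigl => b'; apply/imsetP/andP.
  move=> [b]; rewrite inE => /andP[Hb Hx] ->.
  by split; [rewrite imset_f | rewrite (memg _ _ gK hK) gK].
move=> [/imsetP[b Hb ->]]; rewrite (memg _ _ gK hK) gK => Hx.
by exists b; rewrite // inE Hb.
Qed.
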